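(* Let $n\geq 2$. For $k\in\mathbb{N}$ let $\mathbb{D}_k:=\{2^{-j}:0\leq j\leq k\}$, $\alpha_k:=2^{-nk}$, and $$\mathscr{R}_k:=\Big\{[0,s_1]\times\cdots\times[0,s_{n-1}]\times\Big[0,\frac{\alpha_k}{s_1\cdots s_{n-1}}\Big] : s_1,\dots,s_{n-1}\in\mathbb{D}_k\Big\},$$ and $\mathscr{R}:=\bigcup_{k\in\mathbb{N}}\mathscr{R}_k$. Then for every Orlicz function $\Phi$ with $\Phi=o(\Phi_{n-1})$ at $\infty$, the maximal operator $M_{\mathscr{R}}$ does not satisfy a weak $L^\Phi$ inequality.
   Context: For a family $\mathscr{R}$ of standard rectangles and measurable $f$, $M_{\mathscr{R}}f(x):=\sup\{\frac{1}{|R|}\int_{\tau(R)}|f| : R\in\mathscr{R},\ \tau \text{ a translation},\ x\in\tau(R)\}$, with $|\cdot|$ Lebesgue measure. An Orlicz function is a convex increasing $\Phi:[0,\infty)\to[0,\infty)$ with $\Phi(0)=0$; $L^\Phi(\mathbb{R}^n)$ is the set of measurable $f$ with $\Phi(|f|)\in L^1$. $M_{\mathscr{R}}$ satisfies a weak $L^\Phi$ inequality if there is $C>0$ such that $|\{M_{\mathscr{R}}f>\lambda\}|\leq\int_{\mathbb{R}^n}\Phi(C|f|/\lambda)$ for all $\lambda>0$ and all $f\in L^\Phi(\mathbb{R}^n)$. For $d>0$, $\Phi_d(t):=t(1+\log_+^d t)$, where $\log_+t=\max(\log t,0)$. *)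

(* Defs.v *)
From HB Require Import structures.
From mathcomp Require Import all_boot all_order all_algebra.
From mathcomp Require Import all_classical all_reals all_analysis.
Unset Printing Implicit Defensive.
Import Order.TTheory GRing.Theory Num.Theory.
Local Open Scope ring_scope.
Local Open Scope classical_set_scope.

Record mspace (R : realType) := MS {
  disp : measure_display;
  car : measurableType disp;
  meas : {measure set car -> \bar R} }.
Arguments MS {R disp car} meas.
Arguments disp {R} m.
Arguments car {R} m.
Arguments meas {R} m.

(* [Rsp R k] is R^(k+1), realised as nested pairs
   (((x_0, x_1), x_2), ..., x_k), equipped with the iterated product of
   the one-dimensional Lebesgue measure (which on Borel sets is the
   (k+1)-dimensional Lebesgue measure). Coordinate i (0-based) is the
   component added at stage i. *)
Fixpoint Rsp (R : realType) (k : nat) : mspace R :=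
  match k with
  | 0 => MS (lebesgue_measure : {measure set (measurableTypeR R) -> \bar R})
  | k'.+1 => @MS R _ (car (Rsp R k') * measurableTypeR R)%type
       (((meas (Rsp R k')) \x
          (lebesgue_measure : {sigma_finite_measure set (measurableTypeR R) -> \bar R}))%E
        : {measure set _ -> \bar R})
  end.

(* R^n for n >= 1 *)
Definition Rn (R : realType) (n : nat) : mspace R := Rsp R n.-1.
Definition leb (R : realType) (n : nat) := meas (Rn R n).

Fixpoint tbox (R : realType) (k : nat) (a l : nat -> R) : set (car (Rsp R k)) :=
  match k return set (car (Rsp R k)) with
  | 0 => fun x => (a 0%N <= (x : R) <= a 0%N + l 0%N)
  | k'.+1 => fun x => @tbox R k' a l x.1 /\
                      (a k'.+1 <= (x.2 : R) <= a k'.+1 + l k'.+1)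
  end.
Arguments tbox {R} k a l.

Definition srect (R : realType) (n : nat) (l : nat -> R) : set (car (Rn R n)) :=
  tbox n.-1 (fun _ => 0) l.
Definition trect (R : realType) (n : nat) (a l : nat -> R) : set (car (Rn R n)) :=
  tbox n.-1 a l.

Arguments srect {R} n l.
Arguments trect {R} n a l.

(** Maximal operator associated with a family [F] of standard rectangles
    (each rectangle given by its vector of side lengths):
    M_F f (x) = sup { |R|^-1 \int_{tau(R)} |f| : R in F, tau translation,
                       x in tau(R) }. *)
Definition maxop (R : realType) (n : nat) (F : set (nat -> R))
    (f : car (Rn R n) -> R) (x : car (Rn R n)) : \bar R :=
  ereal_sup [set v : \bar R | exists (l a : nat -> R),
     [/\ F l, trect n a l x &
      v = (((fine (leb R n (srect n l)))^-1)%:E *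
          \int[leb R n]_(y in trect n a l) (`|f y|)%:E)%E]].

(** Orlicz functions: convex, (non-strictly) increasing on [0, oo), Phi 0 = 0.
    Only the restriction of Phi to [0, oo) matters. *)
Definition orlicz (R : realType) (Phi : R -> R) : Prop :=
  [/\ Phi 0 = 0,
      (forall x y : R, 0 <= x -> x <= y -> Phi x <= Phi y) &
      (forall (x y t : R), 0 <= x -> 0 <= y -> 0 <= t <= 1 ->
         Phi (t * x + (1 - t) * y) <= t * Phi x + (1 - t) * Phi y)].

Definition logp (R : realType) (t : R) : R := Num.max (ln t) 0.
Arguments orlicz {R} Phi.
Arguments logp {R} t.

Definition Phid (R : realType) (d : nat) (t : R) : R := t * (1 + (logp t) ^+ d).

Definition weak_Lphi (R : realType) (n : nat) (F : set (nat -> R))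
    (Phi : R -> R) : Prop :=
  exists C : R, 0 < C /\
    forall (lam : R) (f : car (Rn R n) -> R), 0 < lam ->
      measurable_fun setT f ->
      (leb R n).-integrable setT (fun x => (Phi `|f x|)%:E) ->
      (leb R n [set x | lam%:E < maxop R n F f x] <=
        \int[leb R n]_x (Phi (C * `|f x| / lam))%:E)%E.
Arguments weak_Lphi {R} n F Phi.

Definition Dk (R : realType) (k : nat) (s : R) : Prop :=
  exists j : nat, (j <= k)%N /\ s = (2 ^+ j)^-1.
Definition alpha (R : realType) (n k : nat) : R := (2 ^+ (n * k))^-1.
(* side-length vectors of rectangles in R_k: sides s_1..s_{n-1} in D_k
   (coordinates 0..n-2) and last side alpha_k / (s_1 ... s_{n-1}) *)
Definition calRk (R : realType) (n k : nat) : set (nat -> R) :=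
  [set l | (forall i : nat, (i < n.-1)%N -> Dk R k (l i)) /\
           l n.-1 = alpha R n k / \prod_(i < n.-1) l i].
Definition calR (R : realType) (n : nat) : set (nat -> R) :=
  \bigcup_(k in [set: nat]) calRk R n k.

Definition little_o_infty (R : realType) (Phi Psi : R -> R) : Prop :=
  Phi x / Psi x @[x --> +oo] --> 0.
Arguments little_o_infty {R} Phi Psi.

(* Main.v *)
Require Import Defs.
From HB Require Import structures.
From mathcomp Require Import all_boot all_order all_algebra.
From mathcomp Require Import all_classical all_reals all_analysis.
From mathcomp Require Import measurable_realfun.
From mathcomp Require Import ring lra.
Import Order.TTheory GRing.Theory Num.Theory.
Local Open Scope ring_scope.
Local Open Scope classical_set_scope.

Definition LEB (R : realType) := (lebesgue_measure : {sigma_finite_measure set (measurableTypeR R) -> \bar R}).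

Lemma sfin (R : realType) p : sigma_finite setT (meas (Rsp R p)).
Proof.
elim: p => [|p IH]; first exact: (sigma_finiteT (LEB R)).
have /sigma_finiteP[F [TF ndF Foo]] := IH.
have /sigma_finiteP[G [TG ndG Goo]] := sigma_finiteT (LEB R).
exists (fun n => F n `*` G n).
 rewrite -setXTT TF TG predeqE => -[x y]; split.
    move=> [/= [n _ Fnx] [k _ Gky]]; exists (maxn n k) => //; split.
    - by move: x Fnx; exact/subsetPset/ndF/leq_maxl.
    - by move: y Gky; exact/subsetPset/ndG/leq_maxr.
  by move=> [n _ []/= ? ?]; split; exists n.
move=> k; have [? ?] := Foo k; have [? ?] := Goo k.
split; first exact: measurableX.
rewrite /= (product_measure1E (meas (Rsp R p)) (LEB R))//.
by rewrite lte_mul_pinfty// ge0_fin_numE.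
Qed.

Definition mR (R : realType) p : set (car (Rsp R p)) -> \bar R := meas (Rsp R p).
HB.instance Definition _ R p := Measure.on (mR R p).
HB.instance Definition _ R p := Measure_isSigmaFinite.Build _ _ _ (mR R p) (sfin R p).

Section S.
Variable R : realType.


Lemma leb_le (A B : set R) : A `<=` B -> (lebesgue_measure A <= lebesgue_measure B)%E.
Proof.
move=> AB. rewrite /lebesgue_measure /lebesgue_stieltjes_measure /measure_extension.
exact: le_mu_ext.
Qed.


Lemma int_mono_gen d (T : measurableType d) (mu : {measure set T -> \bar R})
  (f g : T -> \bar R) : (forall x, (0 <= f x)%E) -> (forall x, (f x <= g x)%E) ->
  (\int[mu]_x f x <= \int[mu]_x g x)%E.
Proof.
move=> f0 fg; rewrite !ge0_integralTE//; last by move=> x; exact: le_trans (f0 x) (fg x).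
apply: ereal_sup_le => _ [h hf <-]; exists h => //= x; exact: le_trans (hf x) (fg x).
Qed.

Lemma meas_le p (A B : set (car (Rsp R p))) : A `<=` B -> (meas (Rsp R p) A <= meas (Rsp R p) B)%E.
Proof.
elim: p A B => [|p IH] A B AB; first exact: leb_le.
rewrite /= /product_measure1; apply: int_mono_gen => x /=; first exact: measure_ge0.
apply: leb_le => y; rewrite /xsection /= !inE; exact: AB.
Qed.


Lemma tbox0E (a l : nat -> R) : tbox 0 a l = `[a 0%N, a 0%N + l 0%N]%classic.
Proof. by apply/seteqP; split => x; rewrite /= in_itv. Qed.

Lemma tboxSE k (a l : nat -> R) : tbox k.+1 a l = tbox k a l `*` `[a k.+1, a k.+1 + l k.+1]%classic.
Proof. by apply/seteqP; split => x; rewrite /= in_itv. Qed.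

Lemma tbox_meas k (a l : nat -> R) : measurable (tbox k a l).
Proof.
elim: k => [|k IH]; first by rewrite tbox0E; exact: measurable_itv.
by rewrite tboxSE; apply: measurableX => //; exact: measurable_itv.
Qed.

Lemma leb_cc (a l : R) : 0 <= l -> lebesgue_measure (`[a, a + l]%classic : set R) = l%:E.
Proof.
move=> l0; rewrite lebesgue_measure_itv /= -EFinD addrAC subrr add0r.
case: ltP => // h; congr (_%:E); apply/eqP; rewrite eq_le l0 /=.
by rewrite -(lerD2l a) addr0.
Qed.

Lemma tbox_mu k (a l : nat -> R) : (forall i, (i <= k)%N -> 0 <= l i) ->
  meas (Rsp R k) (tbox k a l) = (\prod_(i < k.+1) l i)%:E.
Proof.
elim: k => [|k IH] l0; first by rewrite tbox0E big_ord1; apply: leb_cc; exact: l0.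
rewrite tboxSE.
transitivity ((meas (Rsp R k) \x LEB R)%E (tbox k a l `*` `[a k.+1, a k.+1 + l k.+1]%classic)); first by [].
rewrite product_measure1E; [|exact: tbox_meas|exact: measurable_itv].
rewrite IH /=; last by move=> i ik; apply: l0; exact: leqW.
have := @leb_cc (a k.+1) _ (l0 k.+1 (leqnn _)). rewrite /LEB. move=> H. rewrite (_ : (_ * _)%E = ((\prod_(i<k.+1) l i)%:E * (l k.+1)%:E)%E); last by congr (_ * _)%E; exact: H.
by rewrite [in RHS]big_ord_recr /= EFinM.
Qed.


Definition I_ (j : nat) : set R := `]((2:R) ^+ j.+1)^-1, ((2:R) ^+ j)^-1]%classic.
Definition phi (k : nat) (t : R) : R := \sum_(j < k) ((2:R) ^+ j) * \1_(I_ j) t.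

Lemma phi_ge0 k t : 0 <= phi k t.
Proof. by apply: sumr_ge0 => j _; rewrite mulr_ge0 // exprn_ge0. Qed.

Lemma phi_meas k : measurable_fun setT (phi k).
Proof.
apply: measurable_sum => j; apply: measurable_funM; first exact: measurable_cst.
by apply: measurable_indic; exact: measurable_itv.
Qed.

Lemma leb_I j : lebesgue_measure (I_ j) = ((2:R) ^+ j.+1)^-1%:E.
Proof.
rewrite /I_ lebesgue_measure_itv /= ifT; last first.
  by rewrite lte_fin ltf_pV2 ?posrE ?exprn_gt0// exprS ltr_pMl ?exprn_gt0// ltr1n.
rewrite -EFinD; congr (_%:E); rewrite exprS invfM.
have h : (2:R) ^+ j != 0 by rewrite expf_neq0.
field; exact: h.
Qed.

Lemma int_phi k : (\int[LEB R]_t (phi k t)%:E = (k%:R / 2)%:E)%E.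
Proof.
under eq_integral do rewrite /phi -sumEFin.
rewrite ge0_integral_sum //; last first.
  move=> j; apply/measurable_EFinP; apply: measurable_funM; first exact: measurable_cst.
  by apply: measurable_indic; exact: measurable_itv.
under eq_bigr => j _.
  under eq_integral do rewrite EFinM.
  rewrite ge0_integralZl_EFin //; last first.
    by apply/measurable_EFinP; apply: measurable_indic; exact: measurable_itv.
  rewrite integral_indic //; last exact: measurable_itv.
  rewrite setIT (_ : (_ * _)%E = ((2:R)^+j)%:E * ((2:R)^+j.+1)^-1%:E)%E; last first.
    by congr (_ * _)%E; exact: leb_I.
  rewrite -EFinM.
  over.
rewrite sumEFin; congr (_%:E).
rewrite (eq_bigr (fun _ => 2^-1)); last first.
  move=> j _; rewrite exprS invfM.
  have h : (2:R) ^+ j != 0 by rewrite expf_neq0.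
  by field; exact: h.
by rewrite sumr_const card_ord mulr_natl.
Qed.

Fixpoint Gf (k p : nat) : car (Rsp R p) -> R :=
  match p return car (Rsp R p) -> R with
  | 0 => phi k
  | p'.+1 => fun z => Gf k p' z.1 * phi k z.2
  end.

Lemma Gf_ge0 k p y : 0 <= Gf k p y.
Proof. elim: p y => [|p IH] y /=; [exact: phi_ge0|by rewrite mulr_ge0 // phi_ge0]. Qed.

Lemma Gf_meas k p : measurable_fun setT (Gf k p).
Proof.
elim: p => [|p IH] /=; first exact: phi_meas.
apply: measurable_funM.
  exact: (measurableT_comp IH measurable_fst).
exact: (measurableT_comp (phi_meas k) measurable_snd).
Qed.

Lemma int_Gf k p : (\int[mR R p]_y (Gf k p y)%:E = ((k%:R / 2) ^+ p.+1)%:E)%E.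
Proof.
elim: p => [|p IH]; first by rewrite expr1; exact: int_phi.
transitivity (\int[(mR R p \x LEB R)%E]_z (Gf k p z.1 * phi k z.2)%:E)%E; first by [].
rewrite fubini_tonelli1 //; last first.
- by move=> z; rewrite lee_fin mulr_ge0 // ?Gf_ge0 ?phi_ge0.
- apply/measurable_EFinP; apply: measurable_funM.
    exact: (measurableT_comp (Gf_meas k p) measurable_fst).
  exact: (measurableT_comp (phi_meas k) measurable_snd).
have inner x : (\int[LEB R]_t ((Gf k p x * phi k t)%:E) = (Gf k p x)%:E * (k%:R/2)%:E)%E.
  under eq_integral do rewrite EFinM.
  rewrite ge0_integralZl_EFin //.
  - by rewrite int_phi.
  - move=> t _. rewrite lee_fin. exact: phi_ge0.
  - by apply/measurable_EFinP; exact: phi_meas.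
  - exact: Gf_ge0.
rewrite /fubini_F /=.
rewrite (eq_integral (fun x => (Gf k p x)%:E * (k%:R/2)%:E)%E); last by move=> x _; exact: inner.
rewrite ge0_integralZr //; last by move=> x _; rewrite lee_fin Gf_ge0.
- transitivity ((((k%:R:R)/2)^+p.+1)%:E * ((k%:R:R)/2)%:E)%E; first by congr (_ * _)%E; exact: IH.
  by rewrite -EFinM [in RHS]exprS mulrC.
- by apply/measurable_EFinP; exact: Gf_meas.
Qed.


Definition V (k p : nat) (a : R) : set (car (Rsp R p.+1)) :=
  [set z | 0 < Gf k p z.1 /\ 0 <= z.2 <= a * Gf k p z.1].

Lemma measV k p a : 0 <= a ->
  meas (Rsp R p.+1) (V k p a) = (a * (k%:R / 2) ^+ p.+1)%:E.
Proof.
move=> a0.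
transitivity (product_measure1 (meas (Rsp R p)) (LEB R) (V k p a)); first by [].
rewrite /product_measure1.
transitivity (\int[mR R p]_y (a * Gf k p y)%:E)%E.
  apply: eq_integral => y _ /=.
  have [Gp|] := ltP 0 (Gf k p y).
    rewrite (_ : xsection _ y = `[0, 0 + a * Gf k p y]%classic).
      by apply: leb_cc; rewrite mulr_ge0 // Gf_ge0.
    apply/seteqP; split => t; rewrite /xsection /= inE /= in_itv /= add0r.
      by case.
    by move=> h; split.
  move=> G0; have -> : Gf k p y = 0 by apply/eqP; rewrite eq_le G0 Gf_ge0.
  rewrite mulr0 (_ : xsection _ y = set0) ?measure0 //.
  apply/seteqP; split => t; rewrite /xsection /= inE /=; last by [].
  by case => h; move: G0; rewrite leNgt h.
under eq_integral do rewrite EFinM.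
rewrite ge0_integralZl_EFin //; last 2 first.
- by move=> y _; rewrite lee_fin Gf_ge0.
- by apply/measurable_EFinP; exact: Gf_meas.
by rewrite int_Gf -EFinM.
Qed.


Lemma inv2_le i j : (i <= j)%N -> ((2:R) ^+ j)^-1 <= ((2:R) ^+ i)^-1.
Proof. by move=> ij; rewrite lef_pV2 ?posrE ?exprn_gt0 // ler_eXn2l // ltr1n. Qed.

Lemma inv2_gt0 j : 0 < ((2:R) ^+ j)^-1.
Proof. by rewrite invr_gt0 exprn_gt0. Qed.

Lemma inv2_le1 j : ((2:R) ^+ j)^-1 <= 1.
Proof. by have := @inv2_le 0 j (leq0n j); rewrite expr0 invr1. Qed.

Lemma I_disj i j t : t \in I_ i -> t \in I_ j -> i = j.
Proof.
wlog ij : i j / (i <= j)%N.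
  move=> H ti tj; case/orP: (leq_total i j) => h; first exact: H.
  by apply/esym; apply: H.
rewrite /I_ !inE /= !in_itv /= => /andP[ai bi] /andP[aj bj].
apply/eqP; rewrite eqn_leq ij /=; rewrite leqNgt; apply/negP => lt.
have h := @inv2_le i.+1 j lt.
have : t < t by apply: (le_lt_trans (le_trans bj h)).
by rewrite ltxx.
Qed.

Lemma phi_pos k t : 0 < phi k t ->
  exists j, [/\ (j < k)%N, t \in I_ j & phi k t = (2:R) ^+ j].
Proof.
move=> ph.
case: (pselect (exists j : 'I_k, t \in I_ j)) => [[j tj]|nj]; last first.
  suff : phi k t = 0 by move=> h; move: ph; rewrite h ltxx.
  rewrite /phi; apply: big1 => j _.
  rewrite indicE; case: (boolP (t \in I_ j)) => tj; last by rewrite mulr0.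
  by exfalso; apply: nj; exists j.
exists j; split => //.
rewrite /phi (bigD1 j) // /= big1 ?addr0; first by rewrite indicE tj mulr1.
move=> i /negP ij; rewrite indicE; case: (boolP (t \in I_ i)) => ti; last by rewrite mulr0.
exfalso; apply: ij; apply/eqP; apply: ord_inj. have := @I_disj i j t. by apply.
Qed.

Lemma tbox_ext k (a l l' : nat -> R) : (forall i, (i <= k)%N -> l i = l' i) ->
  tbox k a l = tbox k a l'.
Proof.
elim: k => [|k IH] h /=; first by rewrite h.
rewrite IH; last by move=> i ik; apply: h; exact: leqW.
by rewrite h.
Qed.

Lemma tbox_sub k (a l l' : nat -> R) : (forall i, (i <= k)%N -> l i <= l' i) ->
  tbox k a l `<=` tbox k a l'.
Proof.
elim: k => [|k IH] h /= x.
  by move=> /andP[h1 h2]; rewrite h1 /= (le_trans h2) // lerD2l h.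
move=> [h1 /andP[h2 h3]]; split.
  by apply: IH h1 => i ik; apply: h; exact: leqW.
by rewrite h2 /= (le_trans h3) // lerD2l h.
Qed.

Lemma Gf_rect k p y : 0 < Gf k p y -> exists l : nat -> R,
  [/\ forall i, (i <= p)%N -> Dk R k (l i), tbox p (fun _ => 0) l y &
     \prod_(i < p.+1) l i = (Gf k p y)^-1].
Proof.
elim: p y => [|p IH] y /=.
  move=> /phi_pos [j [jk tj ->]].
  exists (fun _ => ((2:R) ^+ j)^-1); split.
  - by move=> i _; exists j; split => //; exact: ltnW.
  - by move: tj; rewrite /I_ inE /= in_itv /= add0r => /andP[/ltW h1 ->]; rewrite (le_trans _ h1) // ltW // inv2_gt0.
  - by rewrite big_ord1.
move=> Gp.
have G0 := Gf_ge0 k p y.1; have P0 := phi_ge0 k y.2.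
have Gpos : 0 < Gf k p y.1.
  rewrite lt_def G0 andbT; apply/negP => /eqP h; move: Gp; by rewrite h mul0r ltxx.
have Ppos : 0 < phi k y.2.
  rewrite lt_def P0 andbT; apply/negP => /eqP h; move: Gp; by rewrite h mulr0 ltxx.
have [l [Dl tl pl]] := IH _ Gpos.
have [j [jk tj pj]] := @phi_pos k y.2 Ppos.
exists (fun i => if i == p.+1 then ((2:R) ^+ j)^-1 else l i); split.
- move=> i; rewrite leq_eqVlt; case: eqP => [_ _|ip /= h]; first by exists j; split => //; exact: ltnW.
  by apply: Dl.
- split.
    rewrite (@tbox_ext p _ _ l) // => i ip.
    by rewrite ifF //; apply/negbTE; rewrite neq_ltn ltnS ip.
  rewrite eqxx add0r.
  by move: tj; rewrite /I_ inE /= in_itv /= => /andP[/ltW h1 ->]; rewrite (le_trans _ h1) // ltW // inv2_gt0.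
- rewrite big_ord_recr /= eqxx.
  rewrite (eq_bigr (fun i : 'I_p.+1 => l i)); last first.
    by move=> i _; rewrite ifF //; apply/negbTE; rewrite neq_ltn ltn_ord.
  by rewrite pl pj invfM.
Qed.


Section Key.
Variables (p k : nat).
Let n := p.+2.
Let a := alpha R n k.
Let q := fun i : nat => if i == p.+1 then a else ((2:R) ^+ k)^-1.
Let Q := tbox p.+1 (fun _ => 0) q.
Let vq := (((2:R) ^+ k)^-1) ^+ p.+1 * a.
Let N := 2 * ((2:R) ^+ k) ^+ p.+1.
Let f := fun y : car (Rn R n) => N * \1_Q y.

Lemma a_gt0 : 0 < a.
Proof. by rewrite /a /alpha invr_gt0 exprn_gt0. Qed.

Lemma Qmu : meas (Rsp R p.+1) Q = vq%:E.
Proof.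
rewrite /Q tbox_mu; last first.
  by move=> i _; rewrite /q; case: ifP => _; [exact: ltW a_gt0|exact: ltW (inv2_gt0 _)].
congr (_%:E); rewrite big_ord_recr /= /q eqxx /vq; congr (_ * _).
rewrite (eq_bigr (fun _ => ((2:R)^+k)^-1)) ?prodr_const ?card_ord // => i _.
by rewrite ifF //; apply/negbTE; rewrite neq_ltn ltn_ord.
Qed.

Lemma N_gt0 : 0 < N.
Proof. by rewrite /N mulr_gt0 // exprn_gt0 // exprn_gt0. Qed.

Lemma level_sub : V k p a `<=` [set x | (1%:E < maxop R n (calR R n) f x)%E].
Proof.
move=> x [Gp hx].
have [l [Dl tl pl]] := @Gf_rect k p x.1 Gp.
set P := \prod_(i < p.+1) l i.
have P0 : 0 < P by rewrite /P pl invr_gt0.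
have P1 : P <= 1.
  apply: prodr_ile1 => i _; have [j [jk ->]] := Dl i (ltnSE (ltn_ord i)).
  by rewrite ltW ?inv2_gt0 // inv2_le1.
pose L := fun i : nat => if i == p.+1 then a / P else l i.
have PL : \prod_(i < p.+1) L i = P.
  apply: eq_bigr => i _; rewrite /L ifF //; apply/negbTE; rewrite neq_ltn ltn_ord //.
have L0 : forall i, (i <= p.+1)%N -> 0 <= L i.
  move=> i ip; rewrite /L; case: ifP => [_|/negbT ne].
    by rewrite divr_ge0 // ltW // a_gt0.
  have ip' : (i <= p)%N by move: ip; rewrite leq_eqVlt (negbTE ne).
  by have [j [jk ->]] := Dl i ip'; rewrite ltW // inv2_gt0.
have calL : calR R n L.
  exists k => //; split.
    move=> i ip; rewrite /L ifF; first exact: Dl.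
    by apply/negbTE; rewrite neq_ltn ip.
  by rewrite /L eqxx PL.
have tL : tbox p.+1 (fun _ => 0) L x.
  split.
    by rewrite (@tbox_ext p _ _ l) // => i ip; rewrite /L ifF //; apply/negbTE; rewrite neq_ltn ltnS ip.
  rewrite /L eqxx add0r /P pl invrK; exact: hx.
have QL : Q `<=` tbox p.+1 (fun _ => 0) L.
  apply: tbox_sub => i; rewrite /q /L; case: ifP => [_|/negbT ne] ip.
    by rewrite ler_pdivlMr // ler_piMr // ltW // a_gt0.
  have ip' : (i <= p)%N by move: ip; rewrite leq_eqVlt (negbTE ne).
  have [j [jk ->]] := Dl i ip'; exact: inv2_le.
apply: (lt_le_trans _ (ereal_sup_ubound _)); last first.
  exists L, (fun _ => 0); split; [exact: calL|exact: tL|reflexivity].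
have mS : meas (Rsp R p.+1) (tbox p.+1 (fun _ => 0) L) = a%:E.
  rewrite tbox_mu // big_ord_recr /= PL /L eqxx mulrC divfK //.
  by rewrite gt_eqF.
have mI : (\int[meas (Rsp R p.+1)]_(y in tbox p.+1 (fun _ => 0%R) L) (`|f y|)%:E = (N * vq)%:E)%E.
  rewrite (eq_integral (fun y => (N * \1_Q y)%:E)); last first.
    by move=> y _; rewrite ger0_norm // mulr_ge0 // ltW // N_gt0.
  under eq_integral do rewrite EFinM.
  rewrite ge0_integralZl_EFin //; try (by apply: measurable_funTS; apply/measurable_EFinP; apply: measurable_indic; exact: tbox_meas);
    try (by rewrite ltW // N_gt0); try (exact: tbox_meas).
  rewrite integral_indic; try exact: tbox_meas.
  by rewrite setIidl // Qmu -EFinM.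
rewrite (_ : leb R n (srect n L) = a%:E); last exact: mS.
rewrite (_ : \int[leb R n]_(y in trect n (fun _ => 0%R) L) (`|f y|)%:E = (N*vq)%:E)%E; last exact: mI.
rewrite /= -EFinM lte_fin.
have -> : a^-1 * (N * vq) = 2.
  rewrite /N /vq exprVn.
  have h1 : a != 0 by rewrite gt_eqF // a_gt0.
  have h2 : (((2:R) ^+ k) ^+ p.+1) != 0 by rewrite !expf_neq0.
  by field; rewrite h1 h2.
by rewrite ltr1n.
Qed.


Variable Phi : R -> R.
Hypothesis orl : orlicz Phi.

Lemma Phi_ge0 x : 0 <= x -> 0 <= Phi x.
Proof. by case: orl => P0 Pm _ x0; rewrite -P0; apply: Pm. Qed.

Lemma PhiE c x : Phi (c * `|f x|) = Phi (c * N) * \1_Q x.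
Proof.
case: orl => P0 _ _.
rewrite /f indicE; case: (x \in Q).
  by rewrite mulr1 mulr1 ger0_norm // ltW // N_gt0.
by rewrite !mulr0 normr0 mulr0 P0.
Qed.

Lemma int_PhiE c : 0 <= c -> (\int[meas (Rsp R p.+1)]_x (Phi (c * `|f x|))%:E = (Phi (c * N) * vq)%:E)%E.
Proof.
move=> c0.
under eq_integral do rewrite PhiE EFinM.
rewrite ge0_integralZl_EFin //; try (by apply/measurable_EFinP; apply: measurable_indic; exact: tbox_meas);
  try (by apply: Phi_ge0; rewrite mulr_ge0 // ltW // N_gt0).
by rewrite integral_indic ?setIT ?Qmu -?EFinM //; exact: tbox_meas.
Qed.

Lemma key (C : R) (H : forall (lam : R) (f : car (Rn R n) -> R), 0 < lam ->
      measurable_fun setT f ->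
      (leb R n).-integrable setT (fun x => (Phi `|f x|)%:E) ->
      (leb R n [set x | lam%:E < maxop R n (calR R n) f x] <=
        \int[leb R n]_x (Phi (C * `|f x| / lam))%:E)%E) :
  0 < C -> a * (k%:R / 2) ^+ p.+1 <= Phi (C * N) * vq.
Proof.
move=> C0.
have mf : measurable_fun setT f.
  by apply: measurable_funM; [exact: measurable_cst|apply: measurable_indic; exact: tbox_meas].
have E1 : forall x, Phi `|f x| = Phi N * \1_Q x.
  by move=> x; have := PhiE 1 x; rewrite !mul1r.
have intf : (leb R n).-integrable setT (fun x => (Phi `|f x|)%:E).
  apply/integrableP; split.
    apply/measurable_EFinP; rewrite (_ : (fun x => Phi `|f x|) = fun x => Phi N * \1_Q x); last first.
      by apply/funext => x; exact: E1.
    by apply: measurable_funM; [exact: measurable_cst|apply: measurable_indic; exact: tbox_meas].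
  rewrite (eq_integral (fun x => (Phi (1 * `|f x|))%:E)); last first.
    by move=> x _; rewrite mul1r gee0_abs // lee_fin Phi_ge0.
  have := @int_PhiE 1 ler01; rewrite mul1r => ->.
  exact: ltry.
have E : (\int[leb R n]_x (Phi (C * `|f x| / 1))%:E = (Phi (C * N) * vq)%:E)%E.
  under eq_integral do rewrite divr1.
  by apply: int_PhiE; exact: ltW.
have := H 1 f ltr01 mf intf; rewrite E => h.
rewrite -lee_fin; apply: le_trans h.
rewrite -measV; last exact: ltW a_gt0.
exact: (@meas_le p.+1 _ _ level_sub).
Qed.

End Key.

End S.



Local Close Scope classical_set_scope.

Theorem mainTheorem4 (R : realType) (n : nat) : (2 <= n)%N ->
  forall Phi : R -> R, orlicz Phi -> little_o_infty Phi (Phid R n.-1) ->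
  ~ weak_Lphi n (calR R n) Phi.
Proof.
case: n => [|[|p]] // _ Phi orl lo [C [C0 H]].
set m := p.+1.
have m1 : (0 < m)%N by [].
pose eps : R := (4 * C * 2 ^+ m * (m.+1)%:R ^+ m)^-1.
have eps0 : 0 < eps.
  by rewrite invr_gt0 !mulr_gt0 // exprn_gt0 // ltr0n.
have [M [_ HM]] := @cvgr0_norm_lt _ _ _ _ _ _ lo _ eps0.
pose x0 : R := 2 * C + `|M| / (2 * C) + 1.
pose k := (Num.trunc x0).+1.
have kx : x0 < k%:R := truncnS_gt x0.
have MC0 : 0 <= `|M| / (2 * C) by rewrite divr_ge0 // mulr_ge0 // ltW.
have k1 : 1 <= (k%:R : R).
  have h : 1 <= x0 by rewrite /x0 lerDr addr_ge0 // mulr_ge0 // ltW.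
  exact: le_trans h (ltW kx).
have kC : 2 * C <= k%:R.
  have h : 2 * C <= x0 by rewrite /x0 -addrA lerDl addr_ge0.
  exact: le_trans h (ltW kx).
have kM : `|M| <= 2 * C * k%:R.
  rewrite mulrC -ler_pdivrMr ?mulr_gt0 //.
  have h : `|M| / (2 * C) <= x0 by rewrite /x0 addrAC lerDr addr_ge0 // mulr_ge0 // ltW.
  exact: le_trans h (ltW kx).
pose Z : R := ((2:R) ^+ k) ^+ m.
have Z0 : 0 < Z by rewrite exprn_gt0 // exprn_gt0.
have kZ : k%:R < Z.
  rewrite /Z -exprM (lt_le_trans (_ : k%:R < (2:R) ^+ k)) //.
    by rewrite -natrX ltr_nat ltn_expl.
  by rewrite ler_eXn2l ?ltr1n // leq_pmulr.
pose T := C * (2 * Z).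
have T0 : 0 < T by rewrite mulr_gt0 // mulr_gt0.
have TM : M < T.
  rewrite (le_lt_trans (ler_norm M)) // (le_lt_trans kM) //.
  by rewrite /T mulrA [C * 2]mulrC ltr_pM2l // mulr_gt0.
have hk : alpha R p.+2 k * (k%:R / 2) ^+ m <= Phi T * (Z^-1 * alpha R p.+2 k).
  by have := @key R p k Phi orl C H C0; rewrite /T /Z exprVn.
have HP := HM T TM.
set a := alpha R p.+2 k in hk.
have a0 : 0 < a by rewrite /a /alpha invr_gt0 exprn_gt0.
pose K : R := (k * m.+1)%:R.
have k0 : (0 < k)%N by [].
have K1 : 1 <= K by rewrite /K ler1n muln_gt0 k0.
have e2 : (2:R) <= expR 1 by have := expR_ge1Dx (1:R); lra.
have eC : 2 * C <= expR k%:R.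
  apply: (le_trans kC); apply: le_trans (expR_ge1Dx _); lra.
have eZ : Z <= expR ((k * m)%:R).
  rewrite /Z -exprM -[X in expR X]mulr1 expRM_natl.
  by apply: lerXn2r => //; rewrite nnegrE ?expR_ge0.
have eT : T <= expR K.
  rewrite /K mulnS natrD expRD /T mulrA [C * 2]mulrC.
  by apply: ler_pM => //; rewrite ?mulr_ge0 // ltW.
have lnT : ln T <= K.
  by rewrite -(expRK K) ler_ln ?posrE ?expR_gt0.
have lp0 : 0 <= logp T by rewrite /logp le_max lexx orbT.
have lpK : logp T <= K by rewrite /logp ge_max lnT /= (le_trans ler01 K1).
have XK : logp T ^+ m <= K ^+ m by apply: lerXn2r => //; rewrite nnegrE // (le_trans ler01 K1).
have K1m := exprn_ege1 m K1.
have lp0m : 0 <= logp T ^+ m by rewrite exprn_ge0.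
have PdT : Phid R m T <= T * (2 * K ^+ m).
  by rewrite /Phid ler_pM2l //; lra.
have Pd0 : 0 < Phid R m T.
  by rewrite /Phid mulr_gt0 //; lra.
have PhiT : Phi T < eps * (T * (2 * K ^+ m)).
  have h1 : Phi T / Phid R m T < eps by apply: le_lt_trans (ler_norm _) HP.
  rewrite ltr_pdivrMr // in h1.
  by apply: (lt_le_trans h1); rewrite ler_pM2l.
have EQ : eps * (T * (2 * K ^+ m)) * (Z^-1 * a) = a * (k%:R / 2) ^+ m.
  rewrite /eps /T /K natrM exprMn expr_div_n.
  have hC : C != 0 by rewrite gt_eqF.
  have hZ : Z != 0 by rewrite gt_eqF.
  have hm : (m.+1%:R : R) ^+ m != 0 by rewrite expf_neq0 // pnatr_eq0.
  have h2 : (2:R) ^+ m != 0 by rewrite expf_neq0 // pnatr_eq0.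
  by field; rewrite hC hZ hm h2.
have : Phi T * (Z^-1 * a) < a * (k%:R / 2) ^+ m.
  by rewrite -EQ ltr_pM2r // mulr_gt0 // invr_gt0.
by rewrite ltNge hk.
Qed.
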